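(* (1) Fix $\xi\in[0,0.13]$. Then both $\eta_\xi(y)$ and $\beta(y)$ are strictly decreasing in $y\in[\cos(2\pi/9),1)$. Consequently, if $y_i=\cos(2\pi/n_i)$ with integers $n_i\ge9$ for $i\in\{2,3,5,6\}$, then $\eta_\xi(y_i)\in[0,0.13]$ and $\beta(y_i)\in[1,2]$ for all $i\in\{2,3,5,6\}$. (2) Fix $y\in(0,1)$. Then $\eta_\xi(y)$ is strictly increasing in $\xi\in[0,\infty)$.
   Context: For $\xi\ge0$ and $y\in(0,1)$, $\eta_\xi(y)$ is the unique positive root $\delta$ of $(2+y)\delta^2+2(2+5y-(1+\xi)^2)\delta-4(1-y)(1+\xi)^2=0$, namely $$\eta_\xi(y)=\frac{-2-5y+(1+\xi)^2+\sqrt{(2+5y-(1+\xi)^2)^2+4(2+y)(1-y)(1+\xi)^2}}{2+y}.$$ Let $b(y)=\frac{16}{y+1}-7$, $c_n=\cos(2\pi/n)$, and $\beta(y)=b(y)$ for $y\in[c_{10},1]$, $\beta(y)=\frac{(2-b(c_{10}))b(y)-(2-b(c_9))b(c_{10})}{b(c_9)-b(c_{10})}$ for $y\in[c_9,c_{10}]$. *)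

(* Defs.v *)
From Stdlib Require Import Reals Lra.
Open Scope R_scope.

(* eta_xi(y): the unique positive root of the quadratic, given explicitly. *)
Definition eta (xi y : R) : R :=
  (-2 - 5*y + (1+xi)^2
   + sqrt ((2 + 5*y - (1+xi)^2)^2 + 4*(2+y)*(1-y)*(1+xi)^2)) / (2+y).

Definition bfun (y : R) : R := 16 / (y + 1) - 7.

Definition cn (n : nat) : R := cos (2 * PI / INR n).

(* beta, defined piecewise on [c_9, 1]; both pieces agree at y = c_10. *)
Definition beta (y : R) : R :=
  if Rle_dec (cn 10) y then bfun y
  else ((2 - bfun (cn 10)) * bfun y - (2 - bfun (cn 9)) * bfun (cn 10))
       / (bfun (cn 9) - bfun (cn 10)).

(* Main.v *)
Require Import Defs.
From Stdlib Require Import Reals Lra Psatz.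
Open Scope R_scope.
Lemma pi_bounds : 3.135 <= PI <= 3.1421.
Proof.
  destruct (PI_2_3_7_ineq 1) as [H1 H2].
  unfold tg_alt, PI_2_3_7_tg, Ratan_seq in *. simpl in *. lra.
Qed.
Lemma cos9 : 0.761 <= cos (2*PI/9).
Proof.
  pose proof pi_bounds.
  destruct (cos_bound (2*PI/9) 1) as [Hc _]; try lra.
  unfold cos_approx, cos_term in Hc. simpl in Hc.
  set (a := 2*PI/9) in *.
  assert (0.6966 <= a <= 0.69825) by (unfold a; lra).
  match type of Hc with ?L <= _ => assert (E : L = 1 - a^2/2 + (a^2)^2/24 - (a^2)^3/720) by field end.
clearbody a. assert (0.4852 <= a^2 <= 0.48756). { clear Hc E. replace (a^2) with (a*a) by ring. split; nra. }
  set (t := a^2) in *. assert (0 <= (0.48756 - t)*(0.5 - (t+0.48756)/24)) by nra. nra.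
Qed.
Lemma cos10 : 0.78 <= cos (2*PI/10).
Proof.
  pose proof pi_bounds.
  destruct (cos_bound (2*PI/10) 0) as [Hc _]; try lra.
  unfold cos_approx, cos_term in Hc. simpl in Hc.
  set (a := 2*PI/10) in *.
  assert (0.6 <= a <= 0.63) by (unfold a; lra).
  match type of Hc with ?L <= _ => assert (E : L = 1 - a^2/2) by field end.
  nra.
Qed.

Definition Qf p B M d := p*d^2 + 2*B*d - M.

Lemma root_facts p B M : 0 < p -> 0 <= M ->
  let s := sqrt (B^2 + p*M) in 0 <= s /\ s*s = B^2 + p*M /\ -B <= s /\ B <= s.
Proof.
  intros Hp HM s.
  assert (H0 : 0 <= B^2 + p*M) by nra.
  assert (Hs : 0 <= s) by apply sqrt_pos.
  assert (Hss : s*s = B^2+p*M) by (apply sqrt_sqrt; auto).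
  repeat split; auto; nra.
Qed.

Lemma Q_factor p B M d : 0 < p -> 0 <= M ->
  let s := sqrt (B^2 + p*M) in
  Qf p B M d = p * (d - (-B + s)/p) * (d - (-B - s)/p).
Proof.
  intros Hp HM s. destruct (root_facts p B M Hp HM) as [_ [Hss _]]. fold s in Hss.
  unfold Qf. field_simplify; [|lra]. 
  replace (s^2) with (s*s) by ring. rewrite Hss. field. lra.
Qed.

Lemma root_pos p B M : 0 < p -> 0 < M -> 0 < (-B + sqrt (B^2 + p*M))/p.
Proof.
  intros Hp HM. destruct (root_facts p B M Hp (Rlt_le _ _ HM)) as [Hs [Hss [H1 H2]]].
  set (s := sqrt (B^2 + p*M)) in *.
  apply Rdiv_lt_0_compat; auto. nra.
Qed.

Lemma root_nonneg p B M : 0 < p -> 0 <= M -> 0 <= (-B + sqrt (B^2 + p*M))/p.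
Proof.
  intros Hp HM. destruct (root_facts p B M Hp HM) as [Hs [Hss [H1 H2]]].
  set (s := sqrt (B^2 + p*M)) in *.
  apply Rmult_le_pos; [lra|]. left; apply Rinv_0_lt_compat; auto.
Qed.

Lemma root_zero p B M : 0 < p -> 0 <= M -> Qf p B M ((-B + sqrt (B^2 + p*M))/p) = 0.
Proof.
  intros Hp HM. rewrite Q_factor; auto. ring.
Qed.

Lemma other_root_neg p B M d : 0 < p -> 0 <= M -> 0 < d ->
  0 < d - (-B - sqrt (B^2 + p*M))/p.
Proof.
  intros Hp HM Hd. destruct (root_facts p B M Hp HM) as [Hs [Hss [H1 H2]]].
  set (s := sqrt (B^2 + p*M)) in *.
  assert (0 <= (B + s)/p) by (apply Rmult_le_pos; [lra| left; apply Rinv_0_lt_compat; auto]).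
  replace (d - (-B - s)/p) with (d + (B+s)/p) by (field; lra). lra.
Qed.

Lemma sign_lt p B M d : 0 < p -> 0 <= M -> 0 < d -> Qf p B M d < 0 ->
  d < (-B + sqrt (B^2 + p*M))/p.
Proof.
  intros Hp HM Hd HQ. pose proof (other_root_neg p B M d Hp HM Hd) as Ho.
  rewrite Q_factor in HQ; auto.
  set (r := (-B + sqrt (B^2 + p*M))/p) in *.
  set (r' := (-B - sqrt (B^2 + p*M))/p) in *.
  destruct (Rlt_or_le d r); auto.
  assert (0 <= p * (d - r) * (d - r')).
  { apply Rmult_le_pos; [apply Rmult_le_pos|]; lra. }
  lra.
Qed.

Lemma sign_gt p B M d : 0 < p -> 0 <= M -> 0 < d -> 0 < Qf p B M d ->
  (-B + sqrt (B^2 + p*M))/p < d.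
Proof.
  intros Hp HM Hd HQ. pose proof (other_root_neg p B M d Hp HM Hd) as Ho.
  rewrite Q_factor in HQ; auto.
  set (r := (-B + sqrt (B^2 + p*M))/p) in *.
  set (r' := (-B - sqrt (B^2 + p*M))/p) in *.
  destruct (Rlt_or_le r d); auto.
  assert (0 <= p * (r - d) * (d - r')).
  { apply Rmult_le_pos; [apply Rmult_le_pos|]; lra. }
  lra.
Qed.

Lemma sign_ge p B M d : 0 < p -> 0 <= M -> 0 < d -> 0 <= Qf p B M d ->
  (-B + sqrt (B^2 + p*M))/p <= d.
Proof.
  intros Hp HM Hd HQ. destruct HQ as [HQ|HQ].
  - left; apply sign_gt; auto.
  - pose proof (other_root_neg p B M d Hp HM Hd) as Ho.
    rewrite Q_factor in HQ; auto.
    set (r := (-B + sqrt (B^2 + p*M))/p) in *.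
    set (r' := (-B - sqrt (B^2 + p*M))/p) in *.
    assert (d - r = 0).
    { symmetry in HQ. apply Rmult_integral in HQ. destruct HQ as [HQ|HQ]; [|lra].
      apply Rmult_integral in HQ. destruct HQ; lra. }
    lra.
Qed.

Lemma eta_eq xi y : eta xi y =
  (-(2+5*y-(1+xi)^2) + sqrt ((2+5*y-(1+xi)^2)^2 + (2+y)*(4*(1-y)*(1+xi)^2)))/(2+y).
Proof.
  unfold eta. replace (4*(2+y)*(1-y)*(1+xi)^2) with ((2+y)*(4*(1-y)*(1+xi)^2)) by ring.
  f_equal. ring.
Qed.

Lemma INR9 : INR 9 = 9. Proof. simpl; ring. Qed.
Lemma INR10 : INR 10 = 10. Proof. simpl; ring. Qed.

Lemma cn9_bound : 0.761 <= cn 9.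
Proof. unfold cn. rewrite INR9. apply cos9. Qed.
Lemma cn10_bound : 0.78 <= cn 10.
Proof. unfold cn. rewrite INR10. apply cos10. Qed.

Lemma cn_arg n : (9 <= n)%nat -> 0 < 2*PI/INR n <= 2*PI/9.
Proof.
  intros Hn. pose proof PI_RGT_0. apply le_INR in Hn. rewrite INR9 in Hn.
  split.
  - apply Rdiv_lt_0_compat; lra.
  - unfold Rdiv. apply Rmult_le_compat_l; [lra|]. apply Rinv_le_contravar; lra.
Qed.

Lemma cn_ge9 n : (9 <= n)%nat -> cn 9 <= cn n.
Proof.
  intros Hn. pose proof (cn_arg n Hn). pose proof PI_RGT_0. unfold cn. rewrite INR9.
  destruct (Req_dec (2*PI/INR n) (2*PI/9)) as [E|E].
  - rewrite E; lra.
  - left. apply cos_decreasing_1; lra.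
Qed.

Lemma cn_lt1 n : (9 <= n)%nat -> cn n < 1.
Proof.
  intros Hn. pose proof (cn_arg n Hn). pose proof PI_RGT_0. unfold cn.
  rewrite <- cos_0. apply cos_decreasing_1; lra.
Qed.

Lemma cn9_lt_10 : cn 9 < cn 10.
Proof.
  unfold cn. rewrite INR9, INR10. pose proof PI_RGT_0. apply cos_decreasing_1; lra.
Qed.

Lemma cn10_le1 : cn 10 <= 1.
Proof. unfold cn. apply COS_bound. Qed.

Lemma bfun_lt y1 y2 : -1 < y1 -> y1 < y2 -> bfun y2 < bfun y1.
Proof.
  intros H1 H2. unfold bfun. unfold Rdiv.
  assert (/ (y2+1) < / (y1+1)) by (apply Rinv_lt_contravar; nra). lra.
Qed.

Lemma bfun_le y1 y2 : -1 < y1 -> y1 <= y2 -> bfun y2 <= bfun y1.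
Proof.
  intros H1 [H2|H2]. left; apply bfun_lt; auto. subst; lra.
Qed.

Lemma bfun_ge1 y : -1 < y -> y <= 1 -> 1 <= bfun y.
Proof.
  intros H1 H2. pose proof (bfun_le y 1 H1 H2). unfold bfun in *.
  replace (16/(1+1) - 7) with 1 in H by field. lra.
Qed.

Definition L (t : R) := ((2 - bfun (cn 10)) * t - (2 - bfun (cn 9)) * bfun (cn 10))
       / (bfun (cn 9) - bfun (cn 10)).

Lemma b_facts : bfun (cn 10) < bfun (cn 9) /\ bfun (cn 10) < 2 /\ 1 <= bfun (cn 10).
Proof.
  pose proof cn9_bound. pose proof cn10_bound. pose proof cn9_lt_10. pose proof cn10_le1.
  split; [apply bfun_lt; lra|]. split; [|apply bfun_ge1; lra].
  pose proof (bfun_le (0.78) (cn 10)). unfold bfun in *.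
  assert (16/(0.78+1) - 7 < 2).
  { unfold Rdiv. assert (E: /(0.78+1) * (0.78+1) = 1) by (apply Rinv_l; lra). lra. }
  specialize (H3 ltac:(lra) ltac:(lra)). lra.
Qed.

Lemma L_lt t1 t2 : t1 < t2 -> L t1 < L t2.
Proof.
  intros H. destruct b_facts as [H1 [H2 H3]]. unfold L, Rdiv.
  apply Rmult_lt_compat_r. apply Rinv_0_lt_compat; lra. nra.
Qed.

Lemma L_le t1 t2 : t1 <= t2 -> L t1 <= L t2.
Proof. intros [H|H]. left; apply L_lt; auto. subst; lra. Qed.

Lemma L_b10 : L (bfun (cn 10)) = bfun (cn 10).
Proof. destruct b_facts as [H1 [H2 H3]]. unfold L. field. lra. Qed.
Lemma L_b9 : L (bfun (cn 9)) = 2.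
Proof. destruct b_facts as [H1 [H2 H3]]. unfold L. field. lra. Qed.

Lemma beta_eq y : beta y = if Rle_dec (cn 10) y then bfun y else L (bfun y).
Proof. reflexivity. Qed.

Theorem lemma4p1 :
  (forall xi : R, 0 <= xi <= 0.13 ->
     (forall y1 y2 : R, cn 9 <= y1 -> y1 < y2 -> y2 < 1 -> eta xi y2 < eta xi y1) /\
     (forall y1 y2 : R, cn 9 <= y1 -> y1 < y2 -> y2 < 1 -> beta y2 < beta y1) /\
     (forall n : nat, (9 <= n)%nat ->
        0 <= eta xi (cn n) <= 0.13 /\ 1 <= beta (cn n) <= 2)) /\
  (forall y : R, 0 < y < 1 ->
     forall xi1 xi2 : R, 0 <= xi1 -> xi1 < xi2 -> eta xi1 y < eta xi2 y).
Proof.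
  pose proof cn9_bound as C9. pose proof cn10_bound as C10.
  pose proof cn9_lt_10 as C910. pose proof cn10_le1 as C101.
  destruct b_facts as [B1 [B2 B3]].
  split.
  - intros xi Hxi. split; [|split].
    + intros y1 y2 H1 H12 H2. rewrite !eta_eq.
      set (a := (1+xi)^2).
      assert (Ha : 1 <= a) by (unfold a; nra).
      apply sign_gt; try nra.
      * apply root_pos; nra.
      * set (d := (-(2+5*y1-a) + sqrt ((2+5*y1-a)^2 + (2+y1)*(4*(1-y1)*a)))/(2+y1)).
        assert (Hd : 0 < d) by (apply root_pos; nra).
        assert (Hz : Qf (2+y1) (2+5*y1-a) (4*(1-y1)*a) d = 0) by (apply root_zero; nra).
        unfold Qf in *. nra.
    + intros y1 y2 H1 H12 H2. rewrite !beta_eq.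
      destruct (Rle_dec (cn 10) y2) as [E2|E2]; destruct (Rle_dec (cn 10) y1) as [E1|E1].
      * apply bfun_lt; lra.
      * apply Rle_lt_trans with (bfun (cn 10)). apply bfun_le; lra.
        rewrite <- L_b10 at 1. apply L_lt. apply bfun_lt; lra.
      * lra.
      * apply L_lt, bfun_lt; lra.
    + intros n Hn. pose proof (cn_ge9 n Hn). pose proof (cn_lt1 n Hn).
      set (y := cn n) in *. split.
      * rewrite eta_eq. set (a := (1+xi)^2).
        assert (Ha : 1 <= a <= 1.2769) by (unfold a; nra).
        split. apply root_nonneg; nra.
        apply sign_ge; try nra. unfold Qf.
        assert (0 <= (y - 0.761)*(1.2769 - a)) by nra. nra.
      * rewrite beta_eq. destruct (Rle_dec (cn 10) y) as [E|E].
        -- split. apply bfun_ge1; lra. apply Rle_trans with (bfun (cn 10)); [apply bfun_le|]; lra.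
        -- split.
           ++ apply Rle_trans with (bfun (cn 10)); auto. rewrite <- L_b10 at 1.
              apply L_le, bfun_le; lra.
           ++ rewrite <- L_b9. apply L_le, bfun_le; lra.
  - intros y Hy xi1 xi2 H1 H12. rewrite !eta_eq.
    set (a1 := (1+xi1)^2). set (a2 := (1+xi2)^2).
    assert (Ha1 : 1 <= a1) by (unfold a1; nra).
    assert (Ha12 : a1 < a2) by (unfold a1, a2; nra).
    set (d := (-(2+5*y-a1) + sqrt ((2+5*y-a1)^2 + (2+y)*(4*(1-y)*a1)))/(2+y)).
    assert (Hd : 0 < d) by (apply root_pos; nra).
    assert (Hz : Qf (2+y) (2+5*y-a1) (4*(1-y)*a1) d = 0) by (apply root_zero; nra).
    apply sign_lt; try nra. unfold Qf in *. nra.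
Qed.
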